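(* Let $p_0,q_0>0$ and $\Delta(p_0,q_0)=\{(p,q):\ p\ge p_0,\ q\ge q_0,\ q_0/p_0\ge q/p\}$. Let $A,B$ be compact operators on a complex separable Hilbert space $H$ such that $A\gtrless B$ and $\|A\|_{p_0,q_0}\ge\|B\|_{p_0,q_0}$ (resp. $>$). Then for every $(p,q)\in\Delta(p_0,q_0)$, $\|A\|_{p,q}\ge\|B\|_{p,q}$ (resp. $>$). Conversely, if $(p,q)\notin\Delta(p_0,q_0)$ (with $p,q>0$), there exist operators $A,B$ of rank at most two such that $A\gtrless B$, $\|A\|_{p_0,q_0}>\|B\|_{p_0,q_0}$ and $\|A\|_{p,q}<\|B\|_{p,q}$.
   Context: For a compact operator $A$ on $H$, $s(A)=(s_n(A))_{n\ge1}$ is its sequence of singular numbers in nonincreasing order. For $p,q>0$, $\|A\|_{p,q}=\|s(A)\|_{\ell(p,q)}$, where for a real sequence $x\to0$ with nonincreasing permutation $x^*$ of $(|x_n|)$, $\|x\|_{\ell(p,q)}=(\sum_{n\ge1}(x_n^* )^q n^{q/p-1})^{1/q}$. For sequences, $x\gtrless y$ means there is $n_0\in\mathbb N$ with $x_n^*\ge y_n^*$ for $n\le n_0$ and $x_n^*\le y_n^*$ for $n>n_0$; for operators, $A\gtrless B$ means $s(A)\gtrless s(B)$. *)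

(* Defs.v *)
From HB Require Import structures.
From mathcomp Require Import all_boot all_order all_algebra.
From mathcomp Require Import all_classical all_reals all_analysis.
Set Implicit Arguments. Unset Strict Implicit. Unset Printing Implicit Defensive.
Import Order.TTheory GRing.Theory Num.Theory.
Local Open Scope ring_scope.
Local Open Scope classical_set_scope.

Section Defs.
Variable R : realType.

(* A sequence s : nat -> R, indexed from 1 (s 0 is ignored), is a sequence of
   singular numbers of a compact operator: s_n >= 0, nonincreasing, s_n -> 0.
   For such s, the nonincreasing rearrangement s* of |s| is s itself. *)
Definition singular_seq (s : nat -> R) : Prop :=
  (forall n, (0 < n)%N -> 0 <= s n) /\
  (forall m n, (0 < m)%N -> (m <= n)%N -> s n <= s m) /\
  (fun n => s n.+1) @ \oo --> (0 : R^o).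

Definition rank_le2 (s : nat -> R) : Prop := forall n, (3 <= n)%N -> s n = 0.

Definition lpq_sum (s : nat -> R) (p q : R) : \bar R :=
  (\sum_(1 <= n <oo) ((s n `^ q) * (n%:R `^ (q / p - 1)))%:E)%E.

Definition lpq_norm (s : nat -> R) (p q : R) : \bar R :=
  match lpq_sum s p q with
  | r%:E => ((r `^ q^-1)%:E)%E
  | _ => (+oo)%E
  end.

Definition gtrless (s t : nat -> R) : Prop :=
  exists n0 : nat, (0 < n0)%N /\
    (forall n, (0 < n)%N -> (n <= n0)%N -> t n <= s n) /\
    (forall n, (n0 < n)%N -> s n <= t n).

Definition inDelta (p0 q0 p q : R) : Prop :=
  p0 <= p /\ q0 <= q /\ q / p <= q0 / p0.

End Defs.

(* Main.v *)
Require Import Defs.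
From HB Require Import structures.
From mathcomp Require Import all_boot all_order all_algebra.
From mathcomp Require Import all_classical all_reals all_analysis.
From mathcomp Require Import ring lra.
Import Order.TTheory GRing.Theory Num.Theory.
Local Open Scope ring_scope.

Section S.
Variable R : realType.

Lemma tangent (s u v : R) : 1 <= s -> 0 <= u -> 0 <= v ->
  s * v `^ (s - 1) * (u - v) <= u `^ s - v `^ s.
Proof.
move=> s1 u0 v0.
have s0 : 0 < s by rewrite (lt_le_trans ltr01).
have [->|sn1] := eqVneq s 1.
  by rewrite subrr powRr0 !mul1r !powRr1.
have s1' : 1 < s by rewrite lt_neqAle eq_sym sn1.
have q0 : 0 < s / (s - 1) by rewrite divr_gt0 // subr_gt0.
have := @conjugate_powR R u (v `^ (s - 1)) s (s / (s - 1)) u0 (powR_ge0 _ _) s0 q0.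
have -> : (v `^ (s - 1)) `^ (s / (s - 1)) = v `^ s.
  rewrite -powRrM; congr (_ `^ _); field; by rewrite subr_eq0.
have s10 : s - 1 != 0 by rewrite subr_eq0.
have s00 : s != 0 by rewrite gt_eqF.
have pq : s^-1 + (s / (s - 1))^-1 = 1.
  by field; rewrite s10 s00.
move=> /(_ pq) H.
set w := v `^ (s - 1) in H *.
have vs : v * w = v `^ s by rewrite mulr_powRB1.
have H3 : s * (u * w) <= u `^ s + (s - 1) * v `^ s.
  have e : u `^ s + (s - 1) * v `^ s = s * (u `^ s / s + v `^ s / (s / (s - 1))).
    by field; rewrite s10 s00.
  by rewrite e ler_pM2l.
have e2 : s * w * (u - v) = s * (u * w) - s * (v * w) by ring.
rewrite e2 vs; lra.
Qed.


Lemma powR_le (x y r : R) : 0 <= r -> 0 <= x -> x <= y -> x `^ r <= y `^ r.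
Proof. by move=> r0 x0 xy; apply: ge0_ler_powR => //; rewrite nnegrE // (le_trans x0). Qed.

Lemma powR_lt (x y r : R) : 0 < r -> 0 <= x -> x < y -> x `^ r < y `^ r.
Proof. by move=> r0 x0 xy; apply: gt0_ltr_powR => //; rewrite nnegrE // (le_trans x0) // ltW. Qed.

Lemma powR_le_inv (x y r : R) : 0 < r -> 0 <= x -> 0 <= y -> x `^ r <= y `^ r -> x <= y.
Proof.
move=> r0 x0 y0 h; rewrite leNgt; apply/negP => yx.
by move: (@powR_lt y x r r0 y0 yx); rewrite ltNge h.
Qed.

Lemma powR_lt_inv (x y r : R) : 0 < r -> 0 <= x -> 0 <= y -> x `^ r < y `^ r -> x < y.
Proof.
move=> r0 x0 y0 h; rewrite ltNge; apply/negP => yx.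
by move: (@powR_le y x r (ltW r0) y0 yx); rewrite leNgt h.
Qed.

Lemma powR_nexp (m n e : R) : e <= 0 -> 0 < m -> m <= n -> n `^ e <= m `^ e.
Proof.
move=> e0 m0 mn.
have n0 : 0 < n by exact: lt_le_trans mn.
have := @powR_le m n (- e); rewrite oppr_ge0 => /(_ e0 (ltW m0) mn).
by rewrite !powRN lef_pV2 ?posrE ?powR_gt0.
Qed.

Lemma chord (s u v c : R) : 1 <= s -> 0 <= u -> 0 <= v -> 0 <= c ->
  ((c <= v /\ v <= u) \/ (u <= v /\ v <= c)) ->
  s * c `^ (s - 1) * (u - v) <= u `^ s - v `^ s.
Proof.
move=> s1 u0 v0 c0 H; apply: le_trans (@tangent s u v s1 u0 v0).
have s0 : 0 <= s by rewrite (le_trans ler01).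
have s10 : 0 <= s - 1 by rewrite subr_ge0.
case: H => [[cv vu]|[uv vc]].
  by rewrite ler_wpM2r ?subr_ge0 // ler_wpM2l // powR_le.
by rewrite ler_wnM2r ?subr_le0 // ler_wpM2l // powR_le.
Qed.

Definition tm (x : nat -> R) (p q : R) (n : nat) : R := x n `^ q * n%:R `^ (q / p - 1).

Lemma tm_ge0 x p q n : 0 <= tm x p q n.
Proof. by rewrite /tm mulr_ge0 // powR_ge0. Qed.

Lemma lpq_sumE x p q : lpq_sum x p q = (\sum_(1 <= n <oo) (tm x p q n)%:E)%E.
Proof. by []. Qed.

Lemma pw (a b : nat -> R) (p0 q0 p q : R) (n0 n : nat) :
  0 < p0 -> 0 < q0 -> inDelta p0 q0 p q ->
  singular_seq a -> singular_seq b -> (0 < n0)%N ->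
  (forall n, (0 < n)%N -> (n <= n0)%N -> b n <= a n) ->
  (forall n, (n0 < n)%N -> a n <= b n) -> (0 < n)%N ->
  tm b p q n + (q / q0 * (b n0 `^ q0) `^ (q / q0 - 1) * n0%:R `^ (q / p - q0 / p0)) * tm a p0 q0 n
  <= tm a p q n + (q / q0 * (b n0 `^ q0) `^ (q / q0 - 1) * n0%:R `^ (q / p - q0 / p0)) * tm b p0 q0 n.
Proof.
move=> hp0 hq0 [pp [qq rr]] [a0 [am _]] [b0 [bm _]] n00 h1 h2 n0'.
have p00 : 0 < p by exact: lt_le_trans pp.
have q00 : 0 < q by exact: lt_le_trans qq.
set s := q / q0.
have s1 : 1 <= s by rewrite /s ler_pdivlMr // mul1r.
set e := q / p - q0 / p0.
have e0 : e <= 0 by rewrite /e subr_le0.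
set u := a n `^ q0. set v := b n `^ q0. set c := b n0 `^ q0.
set N := (n%:R : R).
have N0 : 0 < N by rewrite /N ltr0n.
set w0 := N `^ (q0 / p0 - 1). set g := N `^ e. set G := (n0%:R : R) `^ e.
set K := s * c `^ (s - 1).
have an0 : 0 <= a n := a0 n n0'.
have bn0 : 0 <= b n := b0 n n0'.
have bn00 : 0 <= b n0 := b0 n0 n00.
have Ea : a n `^ q = u `^ s by rewrite /u /s -powRrM; congr (_ `^ _); field; rewrite gt_eqF.
have Eb : b n `^ q = v `^ s by rewrite /v /s -powRrM; congr (_ `^ _); field; rewrite gt_eqF.
have Ew : N `^ (q / p - 1) = w0 * g.
  rewrite /w0 /g -powRD; last by apply/implyP => _; rewrite gt_eqF.
  by congr (_ `^ _); rewrite /e; ring.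
have Hc : K * (u - v) <= u `^ s - v `^ s.
  apply: chord => //; rewrite ?powR_ge0 //.
  have [nn0|nn0] := leqP n n0.
    left; split; first by apply: powR_le; rewrite ?(ltW hq0) //; exact: bm.
    by apply: powR_le; rewrite ?(ltW hq0) //; exact: h1.
  right; split; first by apply: powR_le; rewrite ?(ltW hq0) //; exact: h2.
  by apply: powR_le; rewrite ?(ltW hq0) //; apply: bm => //; exact: ltnW.
have Hs : 0 <= (u - v) * (g - G).
  have [nn0|nn0] := leqP n n0.
    apply: mulr_ge0; rewrite subr_ge0.
      by apply: powR_le; rewrite ?(ltW hq0) //; exact: h1.
    by apply: powR_nexp => //; rewrite ?ler_nat // ltr0n.
  apply: mulr_le0; rewrite subr_le0.
    by apply: powR_le; rewrite ?(ltW hq0) //; exact: h2.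
  by apply: powR_nexp => //; rewrite ?ler_nat ?ltr0n // ltnW.
have K0 : 0 <= K by rewrite /K mulr_ge0 ?powR_ge0 // (le_trans ler01).
have g0 : 0 <= g by exact: powR_ge0.
have w00 : 0 <= w0 by exact: powR_ge0.
rewrite /tm Ea Eb Ew -/u -/v -/w0 -/N -/G.
move: (u `^ s) (v `^ s) Hc => us vs Hc.
clearbody K G g w0 u v.
rewrite -subr_ge0.
have -> : us * (w0 * g) + K * G * (v * w0) -
    (vs * (w0 * g) + K * G * (u * w0)) =
    w0 * ((us - vs - K * (u - v)) * g + K * ((u - v) * (g - G))) by ring.
by rewrite mulr_ge0 // addr_ge0 // mulr_ge0 // subr_ge0.
Qed.
End S.

Section S2.
Variable R : realType.
Lemma sum_ge0 (x : nat -> R) p q : (0 <= lpq_sum x p q)%E.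
Proof. by rewrite lpq_sumE; apply: nneseries_ge0 => n _ _; rewrite lee_fin tm_ge0. Qed.

Lemma star (a b : nat -> R) (p0 q0 p q : R) (n0 : nat) :
  0 < p0 -> 0 < q0 -> inDelta p0 q0 p q ->
  singular_seq a -> singular_seq b -> (0 < n0)%N ->
  (forall n, (0 < n)%N -> (n <= n0)%N -> b n <= a n) ->
  (forall n, (n0 < n)%N -> a n <= b n) ->
  (lpq_sum b p q + (q / q0 * (b n0 `^ q0) `^ (q / q0 - 1) * n0%:R `^ (q / p - q0 / p0))%:E * lpq_sum a p0 q0 <= lpq_sum a p q + (q / q0 * (b n0 `^ q0) `^ (q / q0 - 1) * n0%:R `^ (q / p - q0 / p0))%:E * lpq_sum b p0 q0)%E.
Proof.
move=> hp0 hq0 hD sa sb n00 h1 h2.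
set lam := (q / q0 * _ * _).
have q00 : 0 < q by case: hD => _ [qq _]; exact: lt_le_trans qq.
have lam0 : 0 <= lam by rewrite /lam !mulr_ge0 ?powR_ge0 ?invr_ge0 // ltW.
rewrite !lpq_sumE !ereal_series -!nneseriesZl; try by move=> *; rewrite lee_fin tm_ge0.
rewrite -!nneseriesD; try by move=> *; rewrite ?mule_ge0 ?lee_fin ?tm_ge0.
apply: lee_nneseries.
  by move=> *; rewrite adde_ge0 // ?mule_ge0 // lee_fin ?tm_ge0.
move=> n /= n0'; rewrite -!EFinM -!EFinD lee_fin.
exact: pw n0'.
Qed.
End S2.

Section S3.
Variable R : realType.

Lemma Wbound (r0 : R) : 0 < r0 -> exists2 M : R, 0 < M &
  forall n : nat, n%:R `^ r0 <= M * \sum_(1 <= k < n.+1) (k%:R : R) `^ (r0 - 1).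
Proof.
move=> r00.
have [r1|r1] := lerP r0 1.
  exists 1 => // n; rewrite mul1r.
  apply: (@le_trans _ _ (\sum_(1 <= k < n.+1) (n%:R : R) `^ (r0 - 1))).
    by rewrite sumr_const_nat subn1 /= -[(n%:R `^ (r0 - 1)) *+ n]mulr_natl mulr_powRB1.
  apply: ler_sum_nat => k /andP[k1 kn].
  by apply: powR_nexp; rewrite ?subr_le0 ?ltr0n ?ler_nat // -ltnS.
exists r0 => // n; elim: n => [|n IH].
  by rewrite powR0 ?gt_eqF // big_geq // mulr0.
rewrite big_nat_recr //= mulrDr.
have := @tangent R r0 n%:R n.+1%:R (ltW r1) (ler0n _ _) (ler0n _ _).
have -> : (n%:R - n.+1%:R : R) = -1 by rewrite -natr1; ring.
lra.
Qed.

Lemma partial (a : nat -> R) (p0 q0 al0 : R) (n : nat) : singular_seq a -> (0 < n)%N ->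
  0 < q0 -> lpq_sum a p0 q0 = al0%:E ->
  a n `^ q0 * \sum_(1 <= k < n.+1) (k%:R : R) `^ (q0 / p0 - 1) <= al0.
Proof.
move=> [a0 [am _]] n0 q00 E.
have := @nneseries_lim_ge R (fun k => (tm R a p0 q0 k)%:E) xpredT 1%N n.+1.
rewrite -lpq_sumE E sumEFin lee_fin => /(_ (fun k _ _ => tm_ge0 _ _ _ _ _)) H.
apply: le_trans H; rewrite mulr_sumr; apply: ler_sum_nat => k /andP[k1 kn].
rewrite /tm ler_wpM2r ?powR_ge0 //; apply: powR_le; [exact: ltW | exact: a0 |].
by apply: am => //; rewrite -ltnS.
Qed.

Lemma incl_lpq (a : nat -> R) (p0 q0 p q al0 : R) :
  0 < p0 -> 0 < q0 -> inDelta p0 q0 p q -> singular_seq a ->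
  lpq_sum a p0 q0 = al0%:E -> (lpq_sum a p q < +oo)%E.
Proof.
move=> hp0 hq0 [pp [qq rr]] sa E.
have sa' := sa; case: sa' => [a0 [am _]].
have p00 : 0 < p by exact: lt_le_trans pp.
have q00 : 0 < q by exact: lt_le_trans qq.
have r00 : 0 < q0 / p0 by rewrite divr_gt0.
have [M M0 HM] := Wbound _ r00.
have al00 : 0 <= al0 by rewrite -lee_fin -E sum_ge0.
pose s := q / q0.
have s1 : 1 <= s by rewrite /s ler_pdivlMr // mul1r.
have s0 : 0 < s by exact: lt_le_trans s1.
pose C := M * al0.
have hb n : (0 < n)%N -> a n `^ q0 * n%:R `^ (q0 / p0) <= C.
  move=> n0; apply: le_trans (_ : a n `^ q0 * (M * \sum_(1 <= k < n.+1) (k%:R : R) `^ (q0 / p0 - 1)) <= C).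
    by rewrite ler_wpM2l ?powR_ge0.
  by rewrite mulrCA /C ler_wpM2l ?(ltW M0) // partial.
have tw n : (0 < n)%N -> tm R a p q n <= C `^ (s - 1) * tm R a p0 q0 n.
  move=> n0.
  have u0 : 0 <= a n `^ q0 by exact: powR_ge0.
  have N0 : 0 < (n%:R : R) by rewrite ltr0n.
  have Ea : a n `^ q = a n `^ q0 * (a n `^ q0) `^ (s - 1).
    by rewrite mulr_powRB1 // -powRrM /s; congr (_ `^ _); field; rewrite gt_eqF.
  have EN : (n%:R : R) `^ (q / p - 1) = n%:R `^ (q0 / p0 - 1) * n%:R `^ (q0 / p0 * (s - 1)) *
     n%:R `^ (q / p - q / p0).
    rewrite -!powRD; try by apply/implyP => _; rewrite gt_eqF.
    by congr (_ `^ _); rewrite /s; field; rewrite !gt_eqF.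
  have EM : (a n `^ q0 * n%:R `^ (q0 / p0)) `^ (s - 1) =
      (a n `^ q0) `^ (s - 1) * n%:R `^ (q0 / p0 * (s - 1)).
    by rewrite (powRM (s - 1) u0 (powR_ge0 _ _)) -!powRrM.
  have Hmu : (n%:R : R) `^ (q / p - q / p0) <= 1.
    have one : (1 : R) `^ (q / p - q / p0) = 1 by rewrite powR1.
    rewrite -[X in _ <= X]one; apply: powR_nexp; rewrite ?ler1n //.
    by rewrite subr_le0 ler_pM2l // lef_pV2 ?posrE.
  have HC : (a n `^ q0 * n%:R `^ (q0 / p0)) `^ (s - 1) <= C `^ (s - 1).
    apply: powR_le; first by rewrite subr_ge0.
      by rewrite mulr_ge0 ?powR_ge0.
    exact: hb.
  rewrite /tm Ea EN.
  have -> : a n `^ q0 * (a n `^ q0) `^ (s - 1) * (n%:R `^ (q0 / p0 - 1) * n%:R `^ (q0 / p0 * (s - 1)) * n%:R `^ (q / p - q / p0)) = (a n `^ q0 * n%:R `^ (q0 / p0 - 1)) * (((a n `^ q0) `^ (s - 1) * n%:R `^ (q0 / p0 * (s - 1))) * n%:R `^ (q / p - q / p0)) by ring.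
  rewrite -EM [C `^ _ * _]mulrC ler_wpM2l ?mulr_ge0 ?powR_ge0 //.
  rewrite -[X in _ <= X]mulr1; apply: ler_pM => //; exact: powR_ge0.
apply: (le_lt_trans (_ : lpq_sum a p q <= (C `^ (s - 1))%:E * lpq_sum a p0 q0)%E).
  rewrite !lpq_sumE !ereal_series -nneseriesZl; last by move=> *; rewrite lee_fin tm_ge0.
  apply: lee_nneseries; first by move=> *; rewrite lee_fin tm_ge0.
  by move=> k /= k1; rewrite -EFinM lee_fin; exact: tw.
by rewrite E -EFinM ltry.
Qed.

End S3.

Section S4.
Variable R : realType.

Lemma finA0 (a b : nat -> R) (p q : R) (n0 : nat) : singular_seq a ->
  (forall n, (n0 < n)%N -> a n <= b n) -> 0 <= q ->
  (lpq_sum b p q < +oo)%E -> (lpq_sum a p q < +oo)%E.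
Proof.
move=> [a0 _] h2 q0 fb.
pose f k := (if (k <= n0)%N then tm R a p q k else 0)%:E.
have Ef : (\sum_(1 <= k <oo) f k = (\sum_(1 <= k < n0.+1) tm R a p q k)%:E)%E.
  rewrite (nneseries_split 1 n0); last by move=> k _; rewrite /f; case: ifP; rewrite lee_fin ?tm_ge0.
  rewrite eseries0 ?adde0; last first.
    by move=> k; rewrite add1n => hk _; rewrite /f leqNgt hk.
  rewrite sumEFin add1n; congr (_%:E); apply: eq_big_nat => k /andP[_ kn].
  by rewrite /f -ltnS kn.
have H : (lpq_sum a p q <= lpq_sum b p q + \sum_(1 <= k <oo) f k)%E.
  rewrite !lpq_sumE !ereal_series -nneseriesD; last 2 first.
  - by move=> *; rewrite lee_fin tm_ge0.
  - by move=> k *; rewrite /f; case: ifP; rewrite lee_fin ?tm_ge0.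
  apply: lee_nneseries; first by move=> *; rewrite lee_fin tm_ge0.
  move=> k /= k1; rewrite /f; case: ifP => hk.
    by rewrite -EFinD lee_fin ler_wpDl ?tm_ge0.
  rewrite adde0 lee_fin /tm ler_wpM2r ?powR_ge0 //.
  by apply: powR_le; [exact: q0 | exact: a0 k k1 | apply: h2; rewrite ltnNge hk].
apply: le_lt_trans H _; rewrite Ef; exact: lte_add_pinfty fb (ltry _).
Qed.

Lemma sum_cases (x : nat -> R) p q :
  (exists r, 0 <= r /\ lpq_sum x p q = r%:E) \/ lpq_sum x p q = +oo%E.
Proof.
have := sum_ge0 R x p q; case: (lpq_sum x p q) => [r| |] //.
  by move=> r0; left; exists r.
by right.
Qed.

End S4.

Section S5.
Variable R : realType.

Lemma part1 (p0 q0 : R) (hp0 : 0 < p0) (hq0 : 0 < q0) :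
  (forall (a b : nat -> R), singular_seq a -> singular_seq b -> gtrless a b ->
     forall p q : R, inDelta p0 q0 p q ->
       ((lpq_norm a p0 q0 < +oo)%E ->
          (lpq_norm b p0 q0 <= lpq_norm a p0 q0)%E ->
          (lpq_norm b p q <= lpq_norm a p q)%E) /\
       ((lpq_norm b p0 q0 < lpq_norm a p0 q0)%E ->
          (lpq_norm b p q < lpq_norm a p q)%E)).
Proof.
move=> a b sa sb [n0 [n00 [h1 h2]]] p q hD.
have [pp [qq rr]] := hD.
have p00 : 0 < p by exact: lt_le_trans pp.
have q00 : 0 < q by exact: lt_le_trans qq.
have St := @star R a b p0 q0 p q n0 hp0 hq0 hD sa sb n00 h1 h2.
move: St; set lam := (q / q0 * _ * _) => St.
have lam0 : 0 <= lam by rewrite /lam !mulr_ge0 ?powR_ge0 ?invr_ge0 // ltW.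
have qi : 0 < q^-1 by rewrite invr_gt0.
have q0i : 0 < q0^-1 by rewrite invr_gt0.
split.
- move=> fa le.
  case: (sum_cases R a p0 q0) => [[al0 [al00 EA0]]|EA0]; last first.
    by move: fa; rewrite /lpq_norm EA0 ltxx.
  case: (sum_cases R b p0 q0) => [[be0 [be00 EB0]]|EB0]; last first.
    by move: le; rewrite /lpq_norm EA0 EB0 leye_eq.
  move: le; rewrite /lpq_norm EA0 EB0 lee_fin => le.
  have bea : be0 <= al0 by apply: (@powR_le_inv R _ _ _ q0i).
  case: (sum_cases R a p q) => [[al [al0' EA]]|EA]; last by rewrite /lpq_norm EA leey.
  case: (sum_cases R b p q) => [[be [be0' EB]]|EB]; last first.
    by move: St; rewrite EA0 EB0 EA EB addye // -!EFinM -EFinD leye_eq.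
  move: St; rewrite EA0 EB0 EA EB -!EFinM -!EFinD lee_fin => St.
  rewrite /lpq_norm ?EA ?EB lee_fin; apply: powR_le => //; first exact: ltW.
  have := mulr_ge0 lam0 (eqbRL (subr_ge0 _ _) bea); rewrite mulrBr; lra.
- move=> lt.
  case: (sum_cases R b p0 q0) => [[be0 [be00 EB0]]|EB0]; last first.
    by move: lt; rewrite {1}/lpq_norm EB0 ltNge leey.
  have fa0 : (lpq_sum a p0 q0 < +oo)%E.
    apply: (@finA0 R a b p0 q0 n0 sa h2 (ltW hq0)); rewrite EB0; exact: ltry.
  case: (sum_cases R a p0 q0) => [[al0 [al00 EA0]]|EA0]; last by rewrite EA0 ltxx in fa0.
  move: lt; rewrite /lpq_norm EA0 EB0 lte_fin => lt.
  have bea : be0 < al0 by apply: (@powR_lt_inv R _ _ _ q0i).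
  have fa := @incl_lpq R a p0 q0 p q al0 hp0 hq0 hD sa EA0.
  case: (sum_cases R a p q) => [[al [al0' EA]]|EA]; last by rewrite EA ltxx in fa.
  case: (sum_cases R b p q) => [[be [be0' EB]]|EB]; last first.
    by move: St; rewrite EA0 EB0 EA EB addye // -!EFinM -EFinD leye_eq.
  move: St; rewrite EA0 EB0 EA EB -!EFinM -!EFinD lee_fin => St.
  suff : be < al by move=> h; rewrite /lpq_norm ?EA ?EB lte_fin; apply: powR_lt.
  have [lp|l0] : 0 < lam \/ lam = 0.
    by rewrite lt_neqAle lam0 andbT; case: eqVneq; [right|left].
    have := mulr_gt0 lp (eqbRL (subr_gt0 _ _) bea); rewrite mulrBr; lra.
  have [a0 [am _]] := sa. have [b0 [bm _]] := sb.
  have bn0 : b n0 = 0.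
    have : q / q0 * (b n0 `^ q0) `^ (q / q0 - 1) * n0%:R `^ (q / p - q0 / p0) = 0 := l0.
    move/eqP; rewrite mulf_eq0 => /orP[|]; last by rewrite gt_eqF // powR_gt0 // ltr0n.
    rewrite mulf_eq0 => /orP[|/eqP h]; first by rewrite mulf_eq0 invr_eq0 !gt_eqF.
    exact: powR_eq0_eq0 (powR_eq0_eq0 h).
  have [k [k1 hk]] : exists k, (0 < k)%N /\ b k < a k.
    case: (pselect (exists k, (0 < k)%N /\ b k < a k)) => // nex; exfalso.
    have : (lpq_sum a p0 q0 <= lpq_sum b p0 q0)%E.
      rewrite !lpq_sumE !ereal_series; apply: lee_nneseries.
        by move=> *; rewrite lee_fin tm_ge0.
      move=> j /= j1; rewrite lee_fin /tm ler_wpM2r ?powR_ge0 //.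
      apply: powR_le; [exact: ltW hq0 | exact: a0 j j1 |].
      by rewrite leNgt; apply/negP => hj; apply: nex; exists j.
    by rewrite EA0 EB0 lee_fin leNgt bea.
  have hba j : (0 < j)%N -> b j <= a j.
    move=> j1; case: (leqP j n0) => hj; first exact: h1.
    have : b j <= 0 by rewrite -bn0; apply: bm => //; exact: ltnW.
    move=> hb0; apply: le_trans hb0 _; exact: a0.
  have Hd : lpq_sum a p q = (lpq_sum b p q + \sum_(1 <= i <oo) ((tm R a p q i - tm R b p q i)%:E))%E.
    rewrite !lpq_sumE -nneseriesD; first last.
    - move=> i i1 _; rewrite lee_fin subr_ge0 /tm ler_wpM2r ?powR_ge0 //.
      by apply: powR_le; [exact: ltW | exact: b0 | exact: hba].
    - by move=> *; rewrite lee_fin tm_ge0.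
    by apply: eq_eseriesr => i _; rewrite -EFinD addrC subrK.
  have Hk : ((tm R a p q k - tm R b p q k)%:E <= \sum_(1 <= i <oo) (tm R a p q i - tm R b p q i)%:E)%E.
    apply: le_trans (@nneseries_lim_ge R (fun i => (tm R a p q i - tm R b p q i)%:E) xpredT 1%N k.+1 _).
      rewrite sumEFin lee_fin big_nat_recr //=; apply: ler_wpDl => //.
      rewrite big_nat; apply: sumr_ge0 => i /andP[i1 _]; rewrite subr_ge0 /tm ler_wpM2r ?powR_ge0 //.
      by apply: powR_le; [exact: ltW | exact: b0 | exact: hba].
    move=> i i1 _; rewrite lee_fin subr_ge0 /tm ler_wpM2r ?powR_ge0 //.
    by apply: powR_le; [exact: ltW | exact: b0 | exact: hba].
  have dk : 0 < tm R a p q k - tm R b p q k.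
    rewrite subr_gt0 /tm ltr_pM2r ?powR_gt0 ?ltr0n //.
    by apply: powR_lt => //; exact: b0.
  move: Hd; rewrite EA EB => Hd.
  have := leeD2l (be%:E) Hk; rewrite -Hd -EFinD lee_fin => h.
  lra.
Qed.

End S5.

Section S6.
Variable R : realType.

Definition seq2 (x1 x2 : R) : nat -> R :=
  fun n => if n == 1%N then x1 else if n == 2%N then x2 else 0.

Lemma seq2_sing x1 x2 : 0 <= x2 -> x2 <= x1 -> singular_seq (seq2 x1 x2).
Proof.
move=> x20 x21; have x10 : 0 <= x1 by exact: le_trans x21.
split; [|split].
- by move=> [|[|[|n]]] //= _; rewrite /seq2.
- move=> [|[|[|m]]] [|[|[|n]]] //= _ _; rewrite /seq2 //=.
- apply: (cvg_near_cst (0 : R^o)); exists 2%N => // n /= hn.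
  by rewrite /seq2 /= !eqSS; case: n hn => [|[|n]].
Qed.

Lemma seq2_rank x1 x2 : rank_le2 (seq2 x1 x2).
Proof. by move=> [|[|[|n]]]. Qed.

Lemma seq2_gtr x1 x2 y1 y2 : y1 <= x1 -> x2 <= y2 -> gtrless (seq2 x1 x2) (seq2 y1 y2).
Proof.
move=> h1 h2; exists 1%N; split => //; split.
  by move=> [|[|n]] //.
by move=> [|[|[|n]]] //= _; rewrite /seq2 /=.
Qed.

Lemma seq2_sum x1 x2 p q : 0 < q ->
  lpq_sum (seq2 x1 x2) p q = (x1 `^ q + x2 `^ q * 2 `^ (q / p - 1))%:E.
Proof.
move=> q0; rewrite lpq_sumE (nneseries_split 1 2); last by move=> *; rewrite lee_fin tm_ge0.
rewrite eseries0 ?adde0; last first.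
  by move=> [|[|[|i]]] //= _ _; rewrite /tm /seq2 /= powR0 ?gt_eqF // mul0r.
rewrite sumEFin; congr (_%:E).
rewrite big_nat_recr //= big_nat1 /tm /seq2 /= mulr1n powR1 mulr1.
by [].
Qed.

Lemma seq2_norm x1 x2 p q : 0 < q ->
  lpq_norm (seq2 x1 x2) p q = ((x1 `^ q + x2 `^ q * 2 `^ (q / p - 1)) `^ q^-1)%:E.
Proof. by move=> q0; rewrite /lpq_norm seq2_sum. Qed.

End S6.

Section S7.
Variable R : realType.

Lemma powRK (x r : R) : 0 <= x -> r != 0 -> (x `^ r^-1) `^ r = x.
Proof. by move=> x0 r0; rewrite -powRrM mulVf // powRr1. Qed.

Lemma powRKV (x r : R) : 0 <= x -> r != 0 -> (x `^ r) `^ r^-1 = x.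
Proof. by move=> x0 r0; rewrite -powRrM mulfV // powRr1. Qed.

Lemma pow2_lt (x y : R) : x < y -> 2 `^ x < 2 `^ y.
Proof.
move=> xy; rewrite /powR pnatr_eq0 /= ltr_expR ltr_pM2r //.
by rewrite ln_gt0 // ltr1n.
Qed.

Lemma norm_lt (x1 x2 y1 y2 p q : R) : 0 < q -> 0 <= x1 -> 0 <= x2 ->
  x1 `^ q + x2 `^ q * 2 `^ (q / p - 1) < y1 `^ q + y2 `^ q * 2 `^ (q / p - 1) ->
  (lpq_norm (seq2 R x1 x2) p q < lpq_norm (seq2 R y1 y2) p q)%E.
Proof.
move=> q0 x10 x20 h; rewrite !seq2_norm // lte_fin; apply: powR_lt => //.
  by rewrite invr_gt0.
by rewrite addr_ge0 ?mulr_ge0 ?powR_ge0.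
Qed.


Lemma part2 (p0 q0 : R) (hp0 : 0 < p0) (hq0 : 0 < q0) :
  (forall p q : R, 0 < p -> 0 < q -> ~ inDelta p0 q0 p q ->
     exists a b : nat -> R,
       [/\ singular_seq a /\ singular_seq b, rank_le2 a /\ rank_le2 b,
           gtrless a b,
           (lpq_norm b p0 q0 < lpq_norm a p0 q0)%E &
           (lpq_norm a p q < lpq_norm b p q)%E]).
Proof.
move=> p q hp hq nD.
have k0p : 0 < (2 : R) `^ (q0 / p0 - 1) by rewrite powR_gt0.
have kp : 0 < (2 : R) `^ (q / p - 1) by rewrite powR_gt0.
move: k0p kp; set k0 := (2 : R) `^ (q0 / p0 - 1); set k := (2 : R) `^ (q / p - 1) => k0p kp.
have one r : (1 : R) `^ r = 1 by rewrite powR1.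
case: (ltP q q0) => [qlt|qge].
- pose t := k / (4 * k0).
  have tp : 0 < t by rewrite divr_gt0 // mulr_gt0.
  have qq0 : 0 < q0 - q by rewrite subr_gt0.
  pose u := t `^ (q0 - q)^-1.
  have u0 : 0 < u by rewrite powR_gt0.
  pose c := u / (1 + u).
  have c0 : 0 < c by rewrite divr_gt0 // addr_gt0.
  have c1 : c <= 1 by rewrite ler_pdivrMr ?mul1r ?addr_gt0 // lerDr.
  have cu : c <= u by rewrite ler_pdivrMr ?addr_gt0 // ler_peMr ?lerDl ?ltW.
  have cct : c `^ (q0 - q) <= t.
    apply: le_trans (_ : u `^ (q0 - q) <= t).
      by apply: powR_le; [exact: ltW | exact: ltW | exact: cu].
    by rewrite powRK ?gt_eqF // ltW.
  pose m := k * c `^ q / 2.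
  have m0 : 0 < m by rewrite divr_gt0 ?mulr_gt0 ?powR_gt0 ?ltr0n.
  pose x := (1 + m) `^ q^-1.
  have x1 : 1 <= x.
    rewrite /x -[X in X <= _](one q^-1).
    by apply: powR_le; [rewrite invr_ge0 ltW | exact: ler01 | rewrite lerDl ltW].
  have x0 : 0 <= x by exact: le_trans x1.
  exists (seq2 R x 0), (seq2 R 1 c); split.
  + by split; apply: seq2_sing => //; exact: ltW.
  + by split; exact: seq2_rank.
  + by apply: seq2_gtr => //; exact: ltW.
  + apply: norm_lt => //; first exact: ltW.
    rewrite one powR0 ?gt_eqF // mul0r addr0.
    apply: (@lt_le_trans _ _ (1 + m)).
      rewrite ltrD2l.
      have -> : c `^ q0 = c `^ q * c `^ (q0 - q).
        by rewrite -powRD ?subrKC //; apply/implyP => _; rewrite gt_eqF.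
      apply: (@le_lt_trans _ _ (c `^ q * t * k0)).
        apply: ler_wpM2r; first exact: ltW.
        by apply: ler_wpM2l; [exact: powR_ge0 | exact: cct].
      have -> : c `^ q * t * k0 = k * c `^ q / 4 by rewrite /t; field; rewrite gt_eqF.
      rewrite /m ltr_pM2l ?mulr_gt0 ?powR_gt0 //.
      by rewrite ltf_pV2 ?posrE // ltr_nat.
    rewrite /x -powRrM; apply: le1r_powR; first by rewrite lerDl ltW.
    by rewrite mulrC ler_pdivlMr // mul1r ltW.
  + apply: norm_lt => //.
    rewrite one powR0 ?gt_eqF // mul0r addr0 /x powRK ?gt_eqF ?addr_ge0 ?ltW //.
    have hy : 0 < c `^ q * k by rewrite mulr_gt0 ?powR_gt0.
    rewrite ltrD2l /m [k * _]mulrC ltr_pdivrMr ?ltr0n // (ltr_pMr _ hy).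
    by rewrite ltr1n.
- have rlt : q0 / p0 < q / p.
    rewrite ltNge; apply/negP => hr.
    have h1 : q0 / p <= q0 / p0 by apply: le_trans hr; rewrite ler_pM2r ?invr_gt0.
    have pp : p0 <= p by move: h1; rewrite ler_pM2l // lef_pV2 ?posrE.
    by apply: nD; split; [exact: pp | split; [exact: qge | exact: hr]].
  have kk : k0 < k by apply: pow2_lt; rewrite ltrD2r.
  pose s := q / q0.
  have s1 : 1 <= s by rewrite /s ler_pdivlMr // mul1r.
  have s0 : 0 < s by exact: lt_le_trans s1.
  pose rho := k0 / k.
  have rho0 : 0 < rho by rewrite divr_gt0.
  have rho1 : rho < 1 by rewrite /rho ltr_pdivrMr // mul1r.
  pose c := ((1 + rho) / 2) `^ s^-1.
  have b0 : 0 < (1 + rho) / 2 by rewrite divr_gt0 ?addr_gt0 ?ltr0n.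
  have b1 : (1 + rho) / 2 < 1 by rewrite ltr_pdivrMr ?ltr0n // mul1r; lra.
  have c0 : 0 < c by rewrite powR_gt0.
  have c1 : c < 1.
    rewrite /c -[X in _ < X](one s^-1); apply: powR_lt; [by rewrite invr_gt0 | exact: ltW | exact: b1].
  have cs : c `^ s = (1 + rho) / 2 by rewrite powRK ?gt_eqF ?ltW.
  pose P := c `^ (s - 1).
  have cs1 : c `^ s <= P.
    by rewrite /P; apply: ger_powR; [rewrite c0 ltW | rewrite gerBl ler01].
  have kP : k0 < k * P.
    apply: lt_le_trans (_ : k * ((1 + rho) / 2) <= k * P); last by rewrite -cs ler_pM2l.
    have -> : k * ((1 + rho) / 2) = (k + k0) / 2 by rewrite /rho; field; rewrite gt_eqF.
    lra.
  pose mu := (k0 + k * P) / 2.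
  have mu1 : k0 < mu by rewrite /mu; lra.
  have mu2 : mu < k * P by rewrite /mu; lra.
  have mu0 : 0 < mu by exact: lt_trans mu1.
  pose d := (1 - c) / (1 + mu).
  have d0 : 0 < d by rewrite divr_gt0 ?subr_gt0 ?addr_gt0.
  pose T := c + d.
  have T1 : T = 1 - mu * d by rewrite /T /d; field; rewrite gt_eqF ?addr_gt0.
  have T0 : 0 < T by rewrite /T addr_gt0.
  have Tle1 : T <= 1 by rewrite T1 gerBl mulr_ge0 ?ltW.
  have cT : c <= T by rewrite /T lerDl ltW.
  have q0i : 0 < q0^-1 by rewrite invr_gt0.
  have q0n : q0 != 0 by rewrite gt_eqF.
  exists (seq2 R 1 (c `^ q0^-1)), (seq2 R (T `^ q0^-1) (T `^ q0^-1)); split.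
  + split; apply: seq2_sing => //; rewrite ?powR_ge0 //.
    rewrite -[X in _ <= X](one q0^-1); apply: powR_le; [exact: ltW | exact: ltW | exact: ltW].
  + by split; exact: seq2_rank.
  + apply: seq2_gtr.
      rewrite -[X in _ <= X](one q0^-1); apply: powR_le; [exact: ltW | exact: ltW | exact: Tle1].
    by apply: powR_le; [exact: ltW | exact: ltW | exact: cT].
  + apply: norm_lt => //; rewrite ?powR_ge0 //.
    rewrite one !powRK ?ltW //.
    have : 0 < d * (mu - k0) by rewrite mulr_gt0 ?subr_gt0.
    have -> : T + T * k0 = 1 - mu * d + (c + d) * k0 by rewrite {1}T1.
    move=> h; rewrite mulrBr in h; rewrite (_ : 2 `^ (q0 / p0 - 1) = k0) //; lra.
  + apply: norm_lt => //; rewrite ?powR_ge0 //.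
    have E x : 0 <= x -> (x `^ q0^-1) `^ q = x `^ s by move=> x0; rewrite -powRrM mulrC.
    rewrite one !E ?ltW //.
    have t1 := @tangent R s T 1 s1 (ltW T0) ler01.
    have t2 := @tangent R s T c s1 (ltW T0) (ltW c0).
    rewrite !one mulr1 -/P in t1 t2.
    have eT1 : T - 1 = - (mu * d) by rewrite T1; ring.
    have eTc : T - c = d by rewrite /T; ring.
    rewrite eT1 in t1; rewrite eTc in t2.
    have h3 : 0 < s * d * (k * P - mu) by apply: mulr_gt0; [exact: mulr_gt0 | rewrite subr_gt0].
    have h4 : k * (s * P * d) <= k * (T `^ s - c `^ s) by rewrite ler_pM2l.
    move: (T `^ s) (c `^ s) t1 t2 h3 h4 => A B t1 t2 h3 h4.
    rewrite (_ : 2 `^ (q / p - 1) = k) // -subr_gt0.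
    have -> : A + A * k - (1 + B * k) = (A - 1 + s * (mu * d)) + (k * (A - B) - k * (s * P * d)) + s * d * (k * P - mu) by ring.
    lra.
Qed.

End S7.

Theorem mainTheorem12 (R : realType) (p0 q0 : R) (hp0 : 0 < p0) (hq0 : 0 < q0) :
  (forall (a b : nat -> R), singular_seq a -> singular_seq b -> gtrless a b ->
     forall p q : R, inDelta p0 q0 p q ->
       ((lpq_norm a p0 q0 < +oo)%E ->
          (lpq_norm b p0 q0 <= lpq_norm a p0 q0)%E ->
          (lpq_norm b p q <= lpq_norm a p q)%E) /\
       ((lpq_norm b p0 q0 < lpq_norm a p0 q0)%E ->
          (lpq_norm b p q < lpq_norm a p q)%E)) /\
  (forall p q : R, 0 < p -> 0 < q -> ~ inDelta p0 q0 p q ->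
     exists a b : nat -> R,
       [/\ singular_seq a /\ singular_seq b, rank_le2 a /\ rank_le2 b,
           gtrless a b,
           (lpq_norm b p0 q0 < lpq_norm a p0 q0)%E &
           (lpq_norm a p q < lpq_norm b p q)%E]).
Proof.
split; [exact: (@part1 R p0 q0 hp0 hq0) | exact: (@part2 R p0 q0 hp0 hq0)].
Qed.
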